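(* Let $\mathbf{p}$ be a finite list of distinct predicate constants (the explainable symbols), and let $C$, $L$, $S$, $D$ be finite sets of causal rules of types C, L, S and D respectively (with respect to $\mathbf{p}$). Let $T$ be the causal theory with explainable symbols $\mathbf{p}$ and set of rules $C\cup L\cup S\cup D$. Then the second-order sentence $\mathrm{SM}_{\mathbf{p}\widehat{\mathbf{p}}}[\mathrm{tr}[C,L,S,D]]$ is logically equivalent to $T\land CC$.
   Context: Formulas are first-order formulas built from $\top,\bot,\neg,\land,\lor,\to$ and quantifiers; $\widetilde\forall F$ denotes the universal closure of $F$. Throughout, the bodies of causal rules contain no implication $\to$. Causal theories. A causal theory $T$ is given by a list $\mathbf{p}$ of distinct predicate constants (explainable symbols; equality is not among them) and a finite set of causal rules $F\Leftarrow G$, where $F,G$ are first-order formulas. For each $p\in\mathbf{p}$ choose a new predicate variable $u_p$ of the same arity; let $\mathbf{u}$ be the list of these. $T^\dagger(\mathbf{u})$ is the conjunction of the formulas $\forall\mathbf{x}(G\to F^{\mathbf{p}}_{\mathbf{u}})$ over all rules $F\Leftarrow G$ of $T$, where $\mathbf{x}$ lists the free variables of $F,G$ and $F^{\mathbf{p}}_{\mathbf{u}}$ is the result of replacing each $p$ by $u_p$. $T$ is identified with the sentence $\forall\mathbf{u}(T^\dagger(\mathbf{u})\leftrightarrow(\mathbf{u}=\mathbf{p}))$, where $\mathbf{u}=\mathbf{p}$ is the conjunction of $\forall\mathbf{x}(u_p(\mathbf{x})\leftrightarrow p(\mathbf{x}))$ for all $p\in\mathbf{p}$. Rule types: a C-rule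 is $\bot\Leftarrow G$; an L-rule has head a literal whose predicate is in $\mathbf{p}$; an S-rule has head $L_1\leftrightarrow L_2$ with $L_1,L_2$ literals whose predicates are in $\mathbf{p}$; a D-rule has head $L_1\lor\dots\lor L_n$ ($n\ge 0$), each $L_i$ a literal with predicate in $\mathbf{p}$, i.e. it has the form $\bigvee_{A\in Pos}A\lor\bigvee_{A\in Neg}\neg A\Leftarrow G$ for sets $Pos,Neg$ of atomic formulas. Stable models. A program rule is a sentence $\widetilde\forall(F\to G)$ with no other occurrence of $\to$ (a sentence without $\to$ is identified with $\top\to F$); a logic program is a conjunction of program rules. For predicate constants (or variables) $p,q$ of the same arity, $p\le q$ is $\forall\mathbf{x}(p(\mathbf{x})\to q(\mathbf{x}))$; for tuples, $\mathbf{p}\le\mathbf{q}$ is the conjunction componentwise, and $\mathbf{p}<\mathbf{q}$ is $(\mathbf{p}\le\mathbf{q})\land\neg(\mathbf{q}\le\mathbf{p})$. For a list $\mathbf{q}$ of intensional predicates with corresponding new predicate variables $\mathbf{w}$, and a logic program $F$, $\mathrm{SM}_{\mathbf{q}}[F]$ is $F\land\neg\exists\mathbf{w}((\mathbf{w}<\mathbf{q})\land F^\diamond(\mathbf{w}))$, where $F^\diamond(\mathbf{w})$ is obtained from $F$ by replacing each occurrence of each $q\in\mathbf{q}$ that is not in the scope of negation $\neg$ by the corresponding variable. Translation. For each $p\in\mathbf{p}$ let $\widehat{p}$ be a new predicate constant of the same arity; $\widehat{\mathbf{p}}$ is the list of these; for an atom $A=p(\mathbf{t})$ with $p\in\mathbf{p}$,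 $\widehat A$ denotes $\widehat p(\mathbf{t})$. $CC$ is the conjunction, over all $p\in\mathbf{p}$, of $\forall\mathbf{x}\neg(p(\mathbf{x})\land\widehat p(\mathbf{x}))$ and $\forall\mathbf{x}\neg(\neg p(\mathbf{x})\land\neg\widehat p(\mathbf{x}))$. Define: $\mathrm{tr}_c[\bot\Leftarrow G]=\widetilde\forall\neg G$; $\mathrm{tr}_l[p(\mathbf{t})\Leftarrow G]=\widetilde\forall(\neg\neg G\to p(\mathbf{t}))$, $\mathrm{tr}_l[\neg p(\mathbf{t})\Leftarrow G]=\widetilde\forall(\neg\neg G\to\widehat p(\mathbf{t}))$; $\mathrm{tr}_s[p_1(\mathbf{t}^1)\leftrightarrow p_2(\mathbf{t}^2)\Leftarrow G]=\mathrm{tr}_s[\neg p_1(\mathbf{t}^1)\leftrightarrow\neg p_2(\mathbf{t}^2)\Leftarrow G]$ is the conjunction of $\widetilde\forall(\neg\neg G\land p_1(\mathbf{t}^1)\to p_2(\mathbf{t}^2))$, $\widetilde\forall(\neg\neg G\land p_2(\mathbf{t}^2)\to p_1(\mathbf{t}^1))$, $\widetilde\forall(\neg\neg G\land \widehat{p_1}(\mathbf{t}^1)\to \widehat{p_2}(\mathbf{t}^2))$, $\widetilde\forall(\neg\neg G\land \widehat{p_2}(\mathbf{t}^2)\to \widehat{p_1}(\mathbf{t}^1))$; $\mathrm{tr}_s[\neg p_1(\mathbf{t}^1)\leftrightarrow p_2(\mathbf{t}^2)\Leftarrow G]=\mathrm{tr}_s[p_1(\mathbf{t}^1)\leftrightarrow\neg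 p_2(\mathbf{t}^2)\Leftarrow G]$ is the conjunction of $\widetilde\forall(\neg\neg G\land \widehat{p_1}(\mathbf{t}^1)\to p_2(\mathbf{t}^2))$, $\widetilde\forall(\neg\neg G\land p_2(\mathbf{t}^2)\to \widehat{p_1}(\mathbf{t}^1))$, $\widetilde\forall(\neg\neg G\land p_1(\mathbf{t}^1)\to \widehat{p_2}(\mathbf{t}^2))$, $\widetilde\forall(\neg\neg G\land \widehat{p_2}(\mathbf{t}^2)\to p_1(\mathbf{t}^1))$; and for a D-rule $\bigvee_{A\in Pos}A\lor\bigvee_{A\in Neg}\neg A\Leftarrow G$, $\mathrm{tr}_d$ gives $\widetilde\forall\big(\neg\neg G\land\bigwedge_{A\in Pos}(\widehat A\lor\neg\widehat A)\land\bigwedge_{A\in Neg}(A\lor\neg A)\to\bigvee_{A\in Pos}A\lor\bigvee_{A\in Neg}\widehat A\big)$. $\mathrm{tr}[C,L,S,D]$ is the conjunction of $\mathrm{tr}_c[R]$ for $R\in C$, $\mathrm{tr}_l[R]$ for $R\in L$, $\mathrm{tr}_s[R]$ for $R\in S$, $\mathrm{tr}_d[R]$ for $R\in D$, and $CC$. In $\mathrm{SM}_{\mathbf{p}\widehat{\mathbf{p}}}$ the intensional predicates are those of $\mathbf{p}$ and $\widehat{\mathbf{p}}$. *)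

(* Defs.v *)
(* deep embedding of first-order syntax,
   with the second-order quantifiers of the definitions of causal theories
   and of SM interpreted directly in Rocq. *)
From mathcomp Require Import all_boot.

Set Implicit Arguments.
Unset Strict Implicit.
Unset Printing Implicit Defensive.

Inductive term (Fn : Type) : Type :=
  | TVar : nat -> term Fn
  | TApp : Fn -> seq (term Fn) -> term Fn.
Arguments TVar {Fn}.

Inductive form (Fn V : Type) : Type :=
  | FTop : form Fn V
  | FBot : form Fn V
  | FAtom : V -> seq (term Fn) -> form Fn V
  | FEq : term Fn -> term Fn -> form Fn V
  | FNeg : form Fn V -> form Fn V
  | FAnd : form Fn V -> form Fn V -> form Fn V
  | FOr : form Fn V -> form Fn V -> form Fn V
  | FImp : form Fn V -> form Fn V -> form Fn V
  | FAll : nat -> form Fn V -> form Fn V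
  | FEx : nat -> form Fn V -> form Fn V.
Arguments FTop {Fn V}.
Arguments FBot {Fn V}.
Arguments FAtom {Fn V}.
Arguments FEq {Fn V}.
Arguments FNeg {Fn V}.
Arguments FAnd {Fn V}.
Arguments FOr {Fn V}.
Arguments FImp {Fn V}.
Arguments FAll {Fn V}.
Arguments FEx {Fn V}.

Section Syntax.
Variable Fn : Type.

Fixpoint tfv (t : term Fn) : seq nat :=
  match t with
  | TVar n => [:: n]
  | TApp _ ts => flatten (map tfv ts)
  end.

Fixpoint ffv V (F : form Fn V) : seq nat :=
  match F with
  | FTop | FBot => [::]
  | FAtom _ ts => flatten (map tfv ts)
  | FEq t1 t2 => tfv t1 ++ tfv t2
  | FNeg A => ffv A
  | FAnd A B | FOr A B | FImp A B => ffv A ++ ffv B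
  | FAll x A | FEx x A => [seq y <- ffv A | y != x]
  end.

Definition ucl V (F : form Fn V) : form Fn V :=
  foldr (fun x A => FAll x A) F (undup (ffv F)).

Fixpoint frename V V' (f : V -> V') (F : form Fn V) : form Fn V' :=
  match F with
  | FTop => FTop
  | FBot => FBot
  | FAtom p ts => FAtom (f p) ts
  | FEq t1 t2 => FEq t1 t2
  | FNeg A => FNeg (frename f A)
  | FAnd A B => FAnd (frename f A) (frename f B)
  | FOr A B => FOr (frename f A) (frename f B)
  | FImp A B => FImp (frename f A) (frename f B)
  | FAll x A => FAll x (frename f A)
  | FEx x A => FEx x (frename f A)
  end.

(* F^diamond(w): occurrences of intensional q (isq q) not in the scope of
   negation are replaced by the predicate variable w_q, represented as inr q;
   all other symbols p are represented as inl p. *)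
Fixpoint fdia V (isq : V -> bool) (F : form Fn V) : form Fn (V + V) :=
  match F with
  | FTop => FTop
  | FBot => FBot
  | FAtom p ts => FAtom (if isq p then inr p else inl p) ts
  | FEq t1 t2 => FEq t1 t2
  | FNeg A => FNeg (frename inl A)
  | FAnd A B => FAnd (fdia isq A) (fdia isq B)
  | FOr A B => FOr (fdia isq A) (fdia isq B)
  | FImp A B => FImp (fdia isq A) (fdia isq B)
  | FAll x A => FAll x (fdia isq A)
  | FEx x A => FEx x (fdia isq A)
  end.

Fixpoint noimp V (F : form Fn V) : bool :=
  match F with
  | FTop | FBot | FAtom _ _ | FEq _ _ => true
  | FNeg A | FAll _ A | FEx _ A => noimp A
  | FAnd A B | FOr A B => noimp A && noimp B
  | FImp _ _ => false
  end.

Fixpoint wf V (ar : V -> nat) (F : form Fn V) : bool :=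
  match F with
  | FTop | FBot | FEq _ _ => true
  | FAtom p ts => size ts == ar p
  | FNeg A | FAll _ A | FEx _ A => wf ar A
  | FAnd A B | FOr A B | FImp A B => wf ar A && wf ar B
  end.

Fixpoint bigand V (l : seq (form Fn V)) : form Fn V :=
  match l with
  | [::] => FTop
  | [:: A] => A
  | A :: l' => FAnd A (bigand l')
  end.

Fixpoint bigor V (l : seq (form Fn V)) : form Fn V :=
  match l with
  | [::] => FBot
  | [:: A] => A
  | A :: l' => FOr A (bigor l')
  end.

End Syntax.

Section Semantics.
Variables (Fn D : Type) (fI : Fn -> seq D -> D).

Definition upd (env : nat -> D) (x : nat) (d : D) : nat -> D :=
  fun n => if n == x then d else env n.

Fixpoint teval (env : nat -> D) (t : term Fn) : D :=
  match t with
  | TVar n => env n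
  | TApp f ts => fI f (map (teval env) ts)
  end.

Fixpoint eval V (I : V -> seq D -> Prop) (env : nat -> D) (F : form Fn V)
  : Prop :=
  match F with
  | FTop => True
  | FBot => False
  | FAtom p ts => I p (map (teval env) ts)
  | FEq t1 t2 => teval env t1 = teval env t2
  | FNeg A => ~ eval I env A
  | FAnd A B => eval I env A /\ eval I env B
  | FOr A B => eval I env A \/ eval I env B
  | FImp A B => eval I env A -> eval I env B
  | FAll x A => forall d : D, eval I (upd env x d) A
  | FEx x A => exists d : D, eval I (upd env x d) A
  end.

Definition sumI V V' (I : V -> seq D -> Prop) (J : V' -> seq D -> Prop)
  : V + V' -> seq D -> Prop :=
  fun v => match v with inl p => I p | inr q => J q end.

Definition ple V (isq : V -> bool) (ar : V -> nat)
  (W I : V -> seq D -> Prop) : Prop :=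
  forall q, isq q -> forall xs : seq D, size xs = ar q -> W q xs -> I q xs.

Definition plt V (isq : V -> bool) (ar : V -> nat)
  (W I : V -> seq D -> Prop) : Prop :=
  ple isq ar W I /\ ~ ple isq ar I W.

Definition SM V (isq : V -> bool) (ar : V -> nat)
  (I : V -> seq D -> Prop) (env : nat -> D) (F : form Fn V) : Prop :=
  eval I env F /\
  ~ exists W : V -> seq D -> Prop,
      plt isq ar W I /\ eval (sumI I W) env (fdia isq F).

End Semantics.

Section Causal.
Variables (Fn : Type) (Pr : eqType).

Record lit := Lit { lsign : bool; lpred : Pr; largs : seq (term Fn) }.

Definition lit_form (l : lit) : form Fn Pr :=
  if lsign l then FAtom (lpred l) (largs l) else FNeg (FAtom (lpred l) (largs l)).

Record rule := Rule { rhead : form Fn Pr; rbody : form Fn Pr }.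

Record crule := CRule { cbody : form Fn Pr }.
Record lrule := LRule { lhead : lit; lbody : form Fn Pr }.
Record srule := SRule { shead1 : lit; shead2 : lit; sbody : form Fn Pr }.
Record drule := DRule { dhead : seq lit; dbody : form Fn Pr }.

Definition iff_form V (A B : form Fn V) : form Fn V := FAnd (FImp A B) (FImp B A).

Definition rule_of_c (r : crule) : rule := Rule FBot (cbody r).
Definition rule_of_l (r : lrule) : rule := Rule (lit_form (lhead r)) (lbody r).
Definition rule_of_s (r : srule) : rule :=
  Rule (iff_form (lit_form (shead1 r)) (lit_form (shead2 r))) (sbody r).
Definition rule_of_d (r : drule) : rule :=
  Rule (bigor (map lit_form (dhead r))) (dbody r).

Definition rules_of (C : seq crule) (L : seq lrule) (S : seq srule)
  (Dr : seq drule) : seq rule :=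
  map rule_of_c C ++ map rule_of_l L ++ map rule_of_s S ++ map rule_of_d Dr.

(* F^p_u : p in pp is replaced by u_p (represented as inr p) *)
Definition usub (pp : seq Pr) (p : Pr) : Pr + Pr :=
  if p \in pp then inr p else inl p.

Definition Tdag (pp : seq Pr) (rs : seq rule) : form Fn (Pr + Pr) :=
  bigand [seq ucl (FImp (frename inl (rbody r)) (frename (usub pp) (rhead r)))
         | r <- rs].

Definition causal_sem (D : Type) (fI : Fn -> seq D -> D) (ar : Pr -> nat)
  (pp : seq Pr) (rs : seq rule) (I : Pr -> seq D -> Prop) (env : nat -> D)
  : Prop :=
  forall U : Pr -> seq D -> Prop,
    eval fI (sumI I U) env (Tdag pp rs) <->
    (forall p, p \in pp -> forall xs : seq D, size xs = ar p ->
       (U p xs <-> I p xs)).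

(* ---- the translation, over the vocabulary Pr + Pr: inl p = p,
        inr p = \hat p ---- *)
Definition hatv (v : Pr + Pr) : Pr := match v with inl p => p | inr p => p end.

Definition latom (l : lit) : form Fn (Pr + Pr) := FAtom (inl (lpred l)) (largs l).
Definition lhat (l : lit) : form Fn (Pr + Pr) := FAtom (inr (lpred l)) (largs l).
Definition tlit (l : lit) : form Fn (Pr + Pr) :=
  if lsign l then latom l else lhat l.

Definition NN (G : form Fn Pr) : form Fn (Pr + Pr) := FNeg (FNeg (frename inl G)).

Definition tr_c (r : crule) : form Fn (Pr + Pr) :=
  ucl (FNeg (frename inl (cbody r))).

Definition tr_l (r : lrule) : form Fn (Pr + Pr) :=
  ucl (FImp (NN (lbody r)) (tlit (lhead r))).

Definition tr_s (r : srule) : form Fn (Pr + Pr) :=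
  let G := NN (sbody r) in
  let l1 := shead1 r in let l2 := shead2 r in
  let imp A B := ucl (FImp (FAnd G A) B) in
  if lsign l1 == lsign l2 then
    bigand [:: imp (latom l1) (latom l2); imp (latom l2) (latom l1);
               imp (lhat l1) (lhat l2); imp (lhat l2) (lhat l1)]
  else
    bigand [:: imp (lhat l1) (latom l2); imp (latom l2) (lhat l1);
               imp (latom l1) (lhat l2); imp (lhat l2) (latom l1)].

Definition tr_d (r : drule) : form Fn (Pr + Pr) :=
  let Pos := [seq l <- dhead r | lsign l] in
  let Neg := [seq l <- dhead r | ~~ lsign l] in
  ucl (FImp (FAnd (NN (dbody r))
                  (FAnd (bigand [seq FOr (lhat l) (FNeg (lhat l)) | l <- Pos])
                        (bigand [seq FOr (latom l) (FNeg (latom l)) | l <- Neg])))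
            (bigor ([seq latom l | l <- Pos] ++ [seq lhat l | l <- Neg]))).

Definition tvars (n : nat) : seq (term Fn) := map TVar (iota 0 n).

Definition CC (ar : Pr -> nat) (pp : seq Pr) : form Fn (Pr + Pr) :=
  bigand (flatten [seq
    [:: ucl (FNeg (FAnd (FAtom (inl p) (tvars (ar p))) (FAtom (inr p) (tvars (ar p)))));
        ucl (FNeg (FAnd (FNeg (FAtom (inl p) (tvars (ar p))))
                        (FNeg (FAtom (inr p) (tvars (ar p))))))]
    | p <- pp]).

Definition tr (ar : Pr -> nat) (pp : seq Pr) (C : seq crule) (L : seq lrule)
  (S : seq srule) (Dr : seq drule) : form Fn (Pr + Pr) :=
  bigand (map tr_c C ++ map tr_l L ++ map tr_s S ++ map tr_d Dr ++ [:: CC ar pp]).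

Definition intens (pp : seq Pr) (v : Pr + Pr) : bool := hatv v \in pp.

End Causal.
Arguments CC {Fn Pr}.
Arguments tvars {Fn}.

(* Main.v *)
Require Import Defs.
From mathcomp Require Import all_boot.
From Stdlib Require List.
From Stdlib Require Classical Setoid Morphisms.
Set Implicit Arguments.
Unset Strict Implicit.
Unset Printing Implicit Defensive.


Section Gen.
Variables (Fn D : Type) (fI : Fn -> seq D -> D).

Fixpoint teval_agree (t : term Fn) (e1 e2 : nat -> D)
  (H : forall n, n \in tfv t -> e1 n = e2 n) {struct t} :
  teval fI e1 t = teval fI e2 t.
Proof.
destruct t as [n|f ts]; simpl.
- apply H; rewrite /= inE eqxx //.
- f_equal. simpl in H. move: ts H. fix go 1. intros [|t ts] H; simpl; first done.
  f_equal.
  + apply teval_agree. intros n Hn; apply H; rewrite /= mem_cat Hn //.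
  + apply go. intros n Hn; apply H; rewrite /= mem_cat Hn orbT //.
Qed.

Lemma map_teval_agree (ts : seq (term Fn)) (e1 e2 : nat -> D) :
  (forall n, n \in flatten (map (@tfv Fn) ts) -> e1 n = e2 n) ->
  map (teval fI e1) ts = map (teval fI e2) ts.
Proof.
elim: ts => [|t ts IH] H //=. f_equal.
- apply teval_agree => n Hn; apply H; rewrite /= mem_cat Hn //.
- apply IH => n Hn; apply H; rewrite /= mem_cat Hn orbT //.
Qed.

Lemma eval_agree V (I : V -> seq D -> Prop) (F : form Fn V) :
  forall e1 e2, (forall n, n \in ffv F -> e1 n = e2 n) ->
  (eval fI I e1 F <-> eval fI I e2 F).
Proof.
elim: F => [| | p ts | t1 t2 | A IA | A IA B IB | A IA B IB | A IA B IB | x A IA | x A IA]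
  e1 e2 H /=.
- done.
- done.
- by rewrite (map_teval_agree H).
- have H1: teval fI e1 t1 = teval fI e2 t1.
    by apply teval_agree => n Hn; apply H; rewrite mem_cat Hn.
  have H2: teval fI e1 t2 = teval fI e2 t2.
    by apply teval_agree => n Hn; apply H; rewrite mem_cat Hn orbT.
  by rewrite H1 H2.
- by move: (IA e1 e2 H); tauto.
- have HA: forall n, n \in ffv A -> e1 n = e2 n by move=> n Hn; apply H; rewrite mem_cat Hn.
  have HB: forall n, n \in ffv B -> e1 n = e2 n by move=> n Hn; apply H; rewrite mem_cat Hn orbT.
  by move: (IA _ _ HA) (IB _ _ HB); tauto.
- have HA: forall n, n \in ffv A -> e1 n = e2 n by move=> n Hn; apply H; rewrite mem_cat Hn.
  have HB: forall n, n \in ffv B -> e1 n = e2 n by move=> n Hn; apply H; rewrite mem_cat Hn orbT.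
  by move: (IA _ _ HA) (IB _ _ HB); tauto.
- have HA: forall n, n \in ffv A -> e1 n = e2 n by move=> n Hn; apply H; rewrite mem_cat Hn.
  have HB: forall n, n \in ffv B -> e1 n = e2 n by move=> n Hn; apply H; rewrite mem_cat Hn orbT.
  by move: (IA _ _ HA) (IB _ _ HB); tauto.
- have K: forall d n, n \in ffv A -> upd e1 x d n = upd e2 x d n.
    move=> d n Hn; rewrite /upd; case: eqP => // /eqP nx; apply H.
    by rewrite mem_filter nx.
  split=> Hd d; [apply/(IA _ _ (K d))|apply/(IA _ _ (K d))]; exact: Hd.
- have K: forall d n, n \in ffv A -> upd e1 x d n = upd e2 x d n.
    move=> d n Hn; rewrite /upd; case: eqP => // /eqP nx; apply H.
    by rewrite mem_filter nx.
  split=> -[d Hd]; exists d; [apply/(IA _ _ (K d))|apply/(IA _ _ (K d))]; exact: Hd.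
Qed.

Lemma eval_foldr V (I : V -> seq D -> Prop) (F : form Fn V) xs :
  forall e, eval fI I e (foldr (fun x A => FAll x A) F xs) <->
  (forall e', (forall n, n \notin xs -> e' n = e n) -> eval fI I e' F).
Proof.
elim: xs => [|x xs IH] e /=.
- split; last by apply; move.
  move=> H e' He'; by apply (proj2 (@eval_agree V I F e' e (fun n _ => He' n isT))).
- split.
  + move=> H e' He'; apply: (proj1 (IH (upd e x (e' x))) (H (e' x))).
    move=> n Hn; rewrite /upd; case: eqP => [->//|/eqP nx]; apply He'.
    by rewrite inE negb_or nx.
  + move=> H d; apply/IH => e' He'; apply H => n; rewrite inE negb_or => /andP[nx nxs].
    by rewrite He' // /upd (negbTE nx).
Qed.

Lemma eval_ucl V (I : V -> seq D -> Prop) (F : form Fn V) e :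
  eval fI I e (ucl F) <-> forall e', eval fI I e' F.
Proof.
rewrite /ucl eval_foldr; split; last by move=> H e' _; apply H.
move=> H e'.
pose e'' n := if n \in ffv F then e' n else e n.
have Ha: forall n, n \in ffv F -> e' n = e'' n by move=> n Hn; rewrite /e'' Hn.
apply (proj2 (@eval_agree V I F e' e'' Ha)).
apply H => n; rewrite mem_undup /e'' => Hn; by rewrite (negbTE Hn).
Qed.

Lemma eval_frename V V' (f : V -> V') (I : V' -> seq D -> Prop) (F : form Fn V) :
  forall e, eval fI I e (frename f F) <-> eval fI (fun v => I (f v)) e F.
Proof.
elim: F => [| | p ts | t1 t2 | A IA | A IA B IB | A IA B IB | A IA B IB | x A IA | x A IA]
  e /=; try done.
- by move: (IA e); tauto.
- by move: (IA e) (IB e); tauto.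
- by move: (IA e) (IB e); tauto.
- by move: (IA e) (IB e); tauto.
- by split=> H d; apply/IA; apply H.
- by split=> -[d H]; exists d; apply/IA.
Qed.

Lemma eval_ext V (I J : V -> seq D -> Prop) (F : form Fn V) :
  (forall v xs, I v xs <-> J v xs) ->
  forall e, eval fI I e F <-> eval fI J e F.
Proof.
move=> HIJ.
elim: F => [| | p ts | t1 t2 | A IA | A IA B IB | A IA B IB | A IA B IB | x A IA | x A IA]
  e /=; try done.
- by move: (IA e); tauto.
- by move: (IA e) (IB e); tauto.
- by move: (IA e) (IB e); tauto.
- by move: (IA e) (IB e); tauto.
- by split=> H d; apply/IA; apply H.
- by split=> -[d H]; exists d; apply/IA.
Qed.

Lemma eval_bigand V (I : V -> seq D -> Prop) (l : seq (form Fn V)) e :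
  eval fI I e (bigand l) <-> forall A, List.In A l -> eval fI I e A.
Proof.
elim: l => [|A l IH]; first by split.
case: l IH => [|B l] IH.
- by split=> [H X [<-|[]]|H]; [|apply H; left].
- change (eval fI I e A /\ eval fI I e (bigand (B :: l)) <-> forall X, List.In X (A :: B :: l) -> eval fI I e X).
  rewrite IH /=. split=> [[HA HB] X [<-|HX]|H]; [done|by apply HB|].
  split; [apply H; by left|move=> X HX; apply H; by right].
Qed.

Lemma eval_bigor V (I : V -> seq D -> Prop) (l : seq (form Fn V)) e :
  eval fI I e (bigor l) <-> exists A, List.In A l /\ eval fI I e A.
Proof.
elim: l => [|A l IH]; first by split=> // -[? []].
case: l IH => [|B l] IH.
- split=> [H|[X [[<-|[]] H]]] //; by exists A; split; [left|].
- change (eval fI I e A \/ eval fI I e (bigor (B :: l)) <-> exists X, List.In X (A :: B :: l) /\ eval fI I e X).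
  rewrite IH /=. split=> [[HA|[X [HX H]]]|[X [[<-|HX] H]]].
  + by exists A; split; [left|].
  + by exists X; split; [right|].
  + by left.
  + by right; exists X.
Qed.

End Gen.


Section Syn.
Variable Fn : Type.

Lemma ffv_frename V V' (f : V -> V') (F : form Fn V) : ffv (frename f F) = ffv F.
Proof. elim: F => [| | p ts | t1 t2 | A IA | A IA B IB | A IA B IB | A IA B IB | x A IA | x A IA] //=; by rewrite ?IA ?IB. Qed.

Lemma ffv_fdia V (isq : V -> bool) (F : form Fn V) : ffv (fdia isq F) = ffv F.
Proof. elim: F => [| | p ts | t1 t2 | A IA | A IA B IB | A IA B IB | A IA B IB | x A IA | x A IA] //=; by rewrite ?ffv_frename ?IA ?IB. Qed.

Lemma fdia_foldr V (isq : V -> bool) (F : form Fn V) xs :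
  fdia isq (foldr (fun x A => FAll x A) F xs) = foldr (fun x A => FAll x A) (fdia isq F) xs.
Proof. by elim: xs => //= x xs ->. Qed.

Lemma fdia_ucl V (isq : V -> bool) (F : form Fn V) : fdia isq (ucl F) = ucl (fdia isq F).
Proof. by rewrite /ucl fdia_foldr ffv_fdia. Qed.

Lemma fdia_bigand V (isq : V -> bool) (l : seq (form Fn V)) :
  fdia isq (bigand l) = bigand (map (fdia isq) l).
Proof. elim: l => //= A [|B l] //= IH. by rewrite IH. Qed.

Lemma fdia_bigor V (isq : V -> bool) (l : seq (form Fn V)) :
  fdia isq (bigor l) = bigor (map (fdia isq) l).
Proof. elim: l => //= A [|B l] //= IH. by rewrite IH. Qed.

Fixpoint atneg V (F : form Fn V) : bool :=
  match F with
  | FTop | FBot | FEq _ _ | FNeg _ => true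
  | FAtom _ _ => false
  | FAnd A B | FOr A B | FImp A B => atneg A && atneg B
  | FAll _ A | FEx _ A => atneg A
  end.

Lemma atneg_foldr V (F : form Fn V) xs :
  atneg (foldr (fun x A => FAll x A) F xs) = atneg F.
Proof. by elim: xs. Qed.

Lemma atneg_ucl V (F : form Fn V) : atneg (ucl F) = atneg F.
Proof. exact: atneg_foldr. Qed.

Lemma atneg_bigand V (l : seq (form Fn V)) :
  (forall A, List.In A l -> atneg A) -> atneg (bigand l).
Proof.
elim: l => //= A [|B l] IH H; first by apply H; left.
rewrite /= (H A (or_introl erefl)) /=. apply IH => X HX; apply H; by right.
Qed.

Variable D : Type.
Variable fI : Fn -> seq D -> D.

Lemma atneg_eval V (isq : V -> bool) (I W : V -> seq D -> Prop) (F : form Fn V) :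
  atneg F -> forall e, eval fI (sumI I W) e (fdia isq F) <-> eval fI I e F.
Proof.
elim: F => [| | p ts | t1 t2 | A IA | A IA B IB | A IA B IB | A IA B IB | x A IA | x A IA]
  //= H e.
- by rewrite (eval_frename fI inl (sumI I W) A e).
- case/andP: H => HA HB; move: (IA HA e) (IB HB e); tauto.
- case/andP: H => HA HB; move: (IA HA e) (IB HB e); tauto.
- case/andP: H => HA HB; move: (IA HA e) (IB HB e); tauto.
- by split=> K d; apply/IA => //; apply K.
- by split=> -[d K]; exists d; apply/IA.
Qed.

End Syn.


Section Main.
Variables (Fn : Type) (Pr : eqType) (ar : Pr -> nat) (pp : seq Pr).
Variables (D : Type) (fI : Fn -> seq D -> D).

Local Notation form := (form Fn).
Local Notation lit := (lit Fn Pr).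

Lemma eval_imp V (J : V -> seq D -> Prop) e (A B : form V) :
  eval fI J e (FImp A B) <-> (eval fI J e A -> eval fI J e B).
Proof. done. Qed.
Lemma eval_and V (J : V -> seq D -> Prop) e (A B : form V) :
  eval fI J e (FAnd A B) <-> (eval fI J e A /\ eval fI J e B).
Proof. done. Qed.
Lemma eval_or V (J : V -> seq D -> Prop) e (A B : form V) :
  eval fI J e (FOr A B) <-> (eval fI J e A \/ eval fI J e B).
Proof. done. Qed.
Lemma eval_neg V (J : V -> seq D -> Prop) e (A : form V) :
  eval fI J e (FNeg A) <-> ~ eval fI J e A.
Proof. done. Qed.
Lemma fdia_imp V (isq : V -> bool) (A B : form V) :
  fdia isq (FImp A B) = FImp (fdia isq A) (fdia isq B).
Proof. done. Qed.
Lemma fdia_and V (isq : V -> bool) (A B : form V) :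
  fdia isq (FAnd A B) = FAnd (fdia isq A) (fdia isq B).
Proof. done. Qed.
Lemma fdia_or V (isq : V -> bool) (A B : form V) :
  fdia isq (FOr A B) = FOr (fdia isq A) (fdia isq B).
Proof. done. Qed.

Lemma forall_in_app X (Q : X -> Prop) l1 l2 :
  (forall x, List.In x (l1 ++ l2) -> Q x) <->
  (forall x, List.In x l1 -> Q x) /\ (forall x, List.In x l2 -> Q x).
Proof.
split=> [H|[H1 H2] x]; last by case/List.in_app_iff; [apply H1|apply H2].
by split=> x Hx; apply H; apply/List.in_app_iff; [left|right].
Qed.

Lemma forall_in_map X Y (f : X -> Y) (Q : Y -> Prop) l :
  (forall y, List.In y (map f l) -> Q y) <-> (forall x, List.In x l -> Q (f x)).
Proof.
split=> [H x Hx|H y /List.in_map_iff [x [<- Hx]]]; last exact: H.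
by apply H; apply List.in_map.
Qed.

Lemma exists_in_map X Y (f : X -> Y) (Q : Y -> Prop) l :
  (exists y, List.In y (map f l) /\ Q y) <-> (exists x, List.In x l /\ Q (f x)).
Proof.
split=> [[y [/List.in_map_iff [x [<- Hx]] H]]|[x [Hx H]]]; first by exists x.
by exists (f x); split => //; apply List.in_map.
Qed.

Lemma In_filter X (P : pred X) (x : X) s :
  List.In x (filter P s) <-> List.In x s /\ P x.
Proof.
elim: s => [|y s IH] /=; first by split=> [[]|[[]]].
case Py: (P y) => /=; rewrite IH; split.
- by case=> [<-|[]]; [split; [left|]|split; [right|]].
- by case=> [[<-|H] Px]; [left|right].
- by case=> H Px; split; [right|].
- by case=> [[E|H] Px]; [rewrite -E Py in Px|].
Qed.

Definition args e (l : lit) := map (teval fI e) (largs l).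
Definition tl (J : Pr + Pr -> seq D -> Prop) e (l : lit) :=
  if lsign l then J (inl (lpred l)) (args e l) else J (inr (lpred l)) (args e l).
Definition tlc (J : Pr + Pr -> seq D -> Prop) e (l : lit) :=
  if lsign l then J (inr (lpred l)) (args e l) else J (inl (lpred l)) (args e l).
Definition litv (U : Pr -> seq D -> Prop) e (l : lit) :=
  if lsign l then U (lpred l) (args e l) else ~ U (lpred l) (args e l).

Notation Pof I := (fun p => I (inl p)).

Lemma NN_eval (I : Pr + Pr -> seq D -> Prop) e G :
  eval fI I e (NN G) <-> eval fI (Pof I) e G.
Proof.
rewrite /NN !eval_neg eval_frename. split; [apply Classical_Prop.NNPP|tauto].
Qed.

Lemma NN_dia (I W : Pr + Pr -> seq D -> Prop) e G :
  eval fI (sumI I W) e (fdia (intens pp) (NN G)) <-> eval fI (Pof I) e G.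
Proof. rewrite atneg_eval //; exact: NN_eval. Qed.

Lemma latom_eval (J : Pr + Pr -> seq D -> Prop) e (l : lit) :
  eval fI J e (latom l) <-> J (inl (lpred l)) (args e l).
Proof. done. Qed.
Lemma lhat_eval (J : Pr + Pr -> seq D -> Prop) e (l : lit) :
  eval fI J e (lhat l) <-> J (inr (lpred l)) (args e l).
Proof. done. Qed.

Lemma latom_dia (I W : Pr + Pr -> seq D -> Prop) e (l : lit) : lpred l \in pp ->
  eval fI (sumI I W) e (fdia (intens pp) (latom l)) <-> W (inl (lpred l)) (args e l).
Proof. by move=> H; rewrite /= /intens /= H. Qed.
Lemma lhat_dia (I W : Pr + Pr -> seq D -> Prop) e (l : lit) : lpred l \in pp ->
  eval fI (sumI I W) e (fdia (intens pp) (lhat l)) <-> W (inr (lpred l)) (args e l).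
Proof. by move=> H; rewrite /= /intens /= H. Qed.

Lemma tlit_eval (J : Pr + Pr -> seq D -> Prop) e (l : lit) :
  eval fI J e (tlit l) <-> tl J e l.
Proof. by rewrite /tlit /tl; case: lsign. Qed.
Lemma tlit_dia (I W : Pr + Pr -> seq D -> Prop) e (l : lit) : lpred l \in pp ->
  eval fI (sumI I W) e (fdia (intens pp) (tlit l)) <-> tl W e l.
Proof. by move=> H; rewrite /tlit /tl; case: lsign; rewrite ?latom_dia ?lhat_dia. Qed.

Lemma trc_eval (I : Pr + Pr -> seq D -> Prop) e r :
  eval fI I e (tr_c r) <-> forall e', ~ eval fI (Pof I) e' (cbody r).
Proof. rewrite /tr_c eval_ucl. by setoid_rewrite eval_neg; setoid_rewrite eval_frename. Qed.

Lemma trc_dia (I W : Pr + Pr -> seq D -> Prop) e r :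
  eval fI (sumI I W) e (fdia (intens pp) (tr_c r)) <-> eval fI I e (tr_c r).
Proof. by rewrite atneg_eval // /tr_c atneg_ucl. Qed.

Lemma trl_eval (I : Pr + Pr -> seq D -> Prop) e r :
  eval fI I e (tr_l r) <->
  forall e', eval fI (Pof I) e' (lbody r) -> tl I e' (lhead r).
Proof.
rewrite /tr_l eval_ucl. setoid_rewrite eval_imp. setoid_rewrite NN_eval.
by setoid_rewrite tlit_eval.
Qed.

Lemma trl_dia (I W : Pr + Pr -> seq D -> Prop) e r : lpred (lhead r) \in pp ->
  eval fI (sumI I W) e (fdia (intens pp) (tr_l r)) <->
  forall e', eval fI (Pof I) e' (lbody r) -> tl W e' (lhead r).
Proof.
move=> H; rewrite /tr_l fdia_ucl eval_ucl fdia_imp. setoid_rewrite eval_imp.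
setoid_rewrite NN_dia. by setoid_rewrite tlit_dia.
Qed.

Definition trS (J : Pr + Pr -> seq D -> Prop) e (r : srule Fn Pr) :=
  (tl J e (shead1 r) <-> tl J e (shead2 r)) /\ (tlc J e (shead1 r) <-> tlc J e (shead2 r)).

Lemma trs_eval (I : Pr + Pr -> seq D -> Prop) e r :
  eval fI I e (tr_s r) <->
  forall e', eval fI (Pof I) e' (sbody r) -> trS I e' r.
Proof.
rewrite /tr_s /trS /tl /tlc.
case: (lsign (shead1 r)); case: (lsign (shead2 r)); rewrite /= !eval_ucl;
setoid_rewrite eval_imp; setoid_rewrite eval_and;
setoid_rewrite NN_eval; setoid_rewrite latom_eval; setoid_rewrite lhat_eval; firstorder.
Qed.

Lemma trs_dia (I W : Pr + Pr -> seq D -> Prop) e r :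
  lpred (shead1 r) \in pp -> lpred (shead2 r) \in pp ->
  eval fI (sumI I W) e (fdia (intens pp) (tr_s r)) <->
  forall e', eval fI (Pof I) e' (sbody r) -> trS W e' r.
Proof.
move=> H1 H2; rewrite /tr_s /trS /tl /tlc.
case: (lsign (shead1 r)); case: (lsign (shead2 r)); rewrite /= !fdia_ucl !eval_ucl;
setoid_rewrite fdia_imp; setoid_rewrite fdia_and;
setoid_rewrite eval_imp; setoid_rewrite eval_and;
setoid_rewrite NN_dia; setoid_rewrite (latom_dia _ _ _ H1); setoid_rewrite (latom_dia _ _ _ H2);
setoid_rewrite (lhat_dia _ _ _ H1); setoid_rewrite (lhat_dia _ _ _ H2); firstorder.
Qed.

Definition prem (J I : Pr + Pr -> seq D -> Prop) e (l : lit) :=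
  if lsign l then J (inr (lpred l)) (args e l) \/ ~ I (inr (lpred l)) (args e l)
  else J (inl (lpred l)) (args e l) \/ ~ I (inl (lpred l)) (args e l).

Definition trD (J I : Pr + Pr -> seq D -> Prop) e (r : drule Fn Pr) :=
  (forall l, List.In l (dhead r) -> prem J I e l) ->
  exists l, List.In l (dhead r) /\ tl J e l.

Lemma bigand_filter V (J : V -> seq D -> Prop) e (g : lit -> form V) (P : pred lit) dh :
  eval fI J e (bigand (map g (filter P dh))) <->
  forall l, List.In l dh -> P l -> eval fI J e (g l).
Proof.
rewrite eval_bigand forall_in_map; split=> H l Hl.
- by move=> Pl; apply H; apply/In_filter.
- by case/In_filter: Hl => Hl Pl; apply H.
Qed.

Lemma bigor_posneg V (J : V -> seq D -> Prop) e (g1 g2 : lit -> form V) dh :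
  eval fI J e (bigor (map g1 [seq l <- dh | lsign l] ++ map g2 [seq l <- dh | ~~ lsign l])) <->
  exists l, List.In l dh /\ (if lsign l then eval fI J e (g1 l) else eval fI J e (g2 l)).
Proof.
rewrite eval_bigor; split.
- move=> [A [/List.in_app_iff [] /List.in_map_iff [l [<- /In_filter [Hl Pl]]] HA]];
  exists l; split => //.
  + by rewrite Pl.
  + by move: Pl; case: lsign.
- move=> [l [Hl H]]; move: H; case Pl: (lsign l) => H.
  + exists (g1 l); split => //; apply/List.in_app_iff; left; apply List.in_map.
    by apply/In_filter.
  + exists (g2 l); split => //; apply/List.in_app_iff; right; apply List.in_map.
    by apply/In_filter; rewrite Pl.
Qed.

Lemma split_sign (X Y : lit -> Prop) dh :
  ((forall l, List.In l dh -> lsign l -> X l) /\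
   (forall l, List.In l dh -> ~~ lsign l -> Y l)) <->
  forall l, List.In l dh -> if lsign l then X l else Y l.
Proof.
split=> [[H1 H2] l Hl|H]; first by case Pl: (lsign l); [apply: H1|apply: H2 => //; rewrite Pl].
by split=> l Hl Pl; move: (H l Hl); [rewrite Pl|rewrite (negbTE Pl)].
Qed.

Lemma trd_eval (I : Pr + Pr -> seq D -> Prop) e r :
  eval fI I e (tr_d r) <->
  forall e', eval fI (Pof I) e' (dbody r) -> trD I I e' r.
Proof.
rewrite /tr_d eval_ucl; apply: Morphisms_Prop.all_iff_morphism => e'.
rewrite eval_imp !eval_and NN_eval !bigand_filter bigor_posneg /trD.
have E1 : (forall l, List.In l (dhead r) -> prem I I e' l) <->
   forall l, List.In l (dhead r) -> if lsign l then eval fI I e' (FOr (lhat l) (FNeg (lhat l)))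
     else eval fI I e' (FOr (latom l) (FNeg (latom l))).
  by [].
have E2 : (exists l, List.In l (dhead r) /\ tl I e' l) <->
   exists l, List.In l (dhead r) /\ (if lsign l then eval fI I e' (latom l) else eval fI I e' (lhat l)).
  by [].
rewrite E1 E2 -split_sign. tauto.
Qed.

Lemma trd_dia (I W : Pr + Pr -> seq D -> Prop) e r :
  (forall l, List.In l (dhead r) -> lpred l \in pp) ->
  eval fI (sumI I W) e (fdia (intens pp) (tr_d r)) <->
  forall e', eval fI (Pof I) e' (dbody r) -> trD W I e' r.
Proof.
move=> Hpp.
rewrite /tr_d fdia_ucl eval_ucl; apply: Morphisms_Prop.all_iff_morphism => e'.
rewrite fdia_imp !fdia_and eval_imp !eval_and NN_dia !fdia_bigand fdia_bigor map_cat
  -!map_comp !bigand_filter bigor_posneg /trD.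
have E1 : (forall l, List.In l (dhead r) -> prem W I e' l) <->
   forall l, List.In l (dhead r) -> if lsign l then
     eval fI (sumI I W) e' ((fdia (intens pp) \o (fun l => FOr (lhat l) (FNeg (lhat l)))) l)
     else eval fI (sumI I W) e' ((fdia (intens pp) \o (fun l => FOr (latom l) (FNeg (latom l)))) l).
  split=> H l Hl; move: (Hpp l Hl) (H l Hl); rewrite /prem /=;
  case: lsign; rewrite /intens /= => ->; by [].
have E2 : (exists l, List.In l (dhead r) /\ tl W e' l) <->
   exists l, List.In l (dhead r) /\ (if lsign l then
     eval fI (sumI I W) e' ((fdia (intens pp) \o (fun l => latom l)) l)
     else eval fI (sumI I W) e' ((fdia (intens pp) \o (fun l => lhat l)) l)).
  split=> -[l [Hl H]]; exists l; split => //; move: (Hpp l Hl) H; rewrite /tl /=;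
  case: lsign; rewrite /intens /= => ->; by [].
rewrite E1 E2 -split_sign. tauto.
Qed.

Definition CCsem (I : Pr + Pr -> seq D -> Prop) :=
  forall p, p \in pp -> forall xs : seq D, size xs = ar p ->
    ~ (I (inl p) xs /\ I (inr p) xs) /\ (I (inl p) xs \/ I (inr p) xs).

Lemma In_mem (p : Pr) s : p \in s -> List.In p s.
Proof. elim: s => //= q s IH; rewrite inE => /orP [/eqP ->|H]; [by left|right; exact: IH]. Qed.

Lemma In_flatten_map X Y (f : X -> seq Y) (x : X) (y : Y) s :
  List.In x s -> List.In y (f x) -> List.In y (flatten (map f s)).
Proof.
elim: s => //= z s IH [<-|Hx] Hy; apply/List.in_app_iff; [by left|right; exact: IH].
Qed.

Lemma teval_tvars (e : nat -> D) n :
  map (teval fI e) (tvars n) = map e (iota 0 n).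
Proof. by rewrite /tvars -map_comp. Qed.

Lemma CC_eval (I : Pr + Pr -> seq D -> Prop) e :
  eval fI I e (CC ar pp) -> CCsem I.
Proof.
rewrite /CC eval_bigand => H p Hp xs Hs.
have K : forall A, List.In A [:: ucl (FNeg (FAnd (FAtom (inl p) (tvars (ar p))) (FAtom (inr p) (tvars (ar p)))));
        ucl (FNeg (FAnd (FNeg (FAtom (inl p) (tvars (ar p))))
                        (FNeg (FAtom (inr p) (tvars (ar p))))))] -> eval fI I e A.
  move=> A HA; apply H; apply: In_flatten_map (In_mem Hp) _; exact: HA.
pose e' i := nth (e 0) xs i.
have Exs : map (teval fI e') (tvars (ar p)) = xs.
  by rewrite teval_tvars -Hs -/(mkseq _ _) mkseq_nth.
move: (K _ (or_introl erefl)) (K _ (or_intror (or_introl erefl))).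
rewrite !eval_ucl => /(_ e') H1 /(_ e') H2.
move: H1 H2; rewrite /= Exs => H1 H2; split => //.
by apply: Classical_Prop.NNPP => K'; apply: H2; split => K''; apply K'; [left|right].
Qed.

Lemma CC_dia (I W : Pr + Pr -> seq D -> Prop) e :
  eval fI I e (CC ar pp) -> eval fI (sumI I W) e (fdia (intens pp) (CC ar pp)).
Proof.
move=> H.
suff Hat : atneg (@CC Fn Pr ar pp) by apply (proj2 (@atneg_eval Fn D fI _ (intens pp) I W (CC ar pp) Hat e)).
apply: atneg_bigand => A HA.
have : forall s : seq Pr, List.In A (flatten [seq
    [:: ucl (FNeg (FAnd (FAtom (inl p) (tvars (ar p))) (FAtom (inr p) (tvars (ar p)))));
        ucl (FNeg (FAnd (FNeg (FAtom (inl p) (tvars (ar p))))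
                        (FNeg (FAtom (inr p) (tvars (ar p))))))] | p <- s]) -> atneg A.
  elim=> //= p s IH [<-|[<-|]]; by rewrite ?atneg_ucl.
by move/(_ pp HA).
Qed.

Lemma forall_in_iff X (A B : X -> Prop) l :
  (forall x, List.In x l -> (A x <-> B x)) ->
  ((forall x, List.In x l -> A x) <-> (forall x, List.In x l -> B x)).
Proof. move=> H; split=> K x Hx; apply/(H x Hx); exact: K. Qed.

Lemma exists_in_iff X (A B : X -> Prop) l :
  (forall x, List.In x l -> (A x <-> B x)) ->
  ((exists x, List.In x l /\ A x) <-> (exists x, List.In x l /\ B x)).
Proof. move=> H; split=> -[x [Hx K]]; exists x; split => //; apply/(H x Hx); exact: K. Qed.

Lemma Tdag_eval (P U : Pr -> seq D -> Prop) e rs :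
  eval fI (sumI P U) e (Tdag pp rs) <->
  forall r, List.In r rs -> forall e', eval fI P e' (rbody r) ->
    eval fI (fun p => sumI P U (usub pp p)) e' (rhead r).
Proof.
rewrite /Tdag eval_bigand forall_in_map.
setoid_rewrite eval_ucl; setoid_rewrite eval_imp; setoid_rewrite eval_frename; done.
Qed.

Lemma lit_head (P U : Pr -> seq D -> Prop) e (l : lit) : lpred l \in pp ->
  eval fI (fun p => sumI P U (usub pp p)) e (lit_form l) <-> litv U e l.
Proof. by move=> H; rewrite /lit_form /litv /usub; case: lsign; rewrite /= H. Qed.

Definition TdagSem (P U : Pr -> seq D -> Prop) C L S Dr :=
  (forall r, List.In r C -> forall e, ~ eval fI P e (cbody r)) /\
  (forall r, List.In r L -> forall e, eval fI P e (lbody r) -> litv U e (lhead r)) /\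
  (forall r, List.In r S -> forall e, eval fI P e (sbody r) ->
     (litv U e (shead1 r) <-> litv U e (shead2 r))) /\
  (forall r, List.In r Dr -> forall e, eval fI P e (dbody r) ->
     exists l, List.In l (dhead r) /\ litv U e l).

Lemma Tdag_sem (P U : Pr -> seq D -> Prop) e C L S Dr :
  (forall r, List.In r L -> lpred (lhead r) \in pp) ->
  (forall r, List.In r S -> lpred (shead1 r) \in pp /\ lpred (shead2 r) \in pp) ->
  (forall r, List.In r Dr -> forall l, List.In l (dhead r) -> lpred l \in pp) ->
  eval fI (sumI P U) e (Tdag pp (rules_of C L S Dr)) <-> TdagSem P U C L S Dr.
Proof.
move=> HL HS HD; rewrite Tdag_eval /rules_of !forall_in_app !forall_in_map /TdagSem.
have EC : (forall r, List.In r C -> forall e', eval fI P e' (rbody (rule_of_c r)) ->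
    eval fI (fun p => sumI P U (usub pp p)) e' (rhead (rule_of_c r))) <->
  (forall r, List.In r C -> forall e, ~ eval fI P e (cbody r)) by [].
have EL : (forall r, List.In r L -> forall e', eval fI P e' (rbody (rule_of_l r)) ->
    eval fI (fun p => sumI P U (usub pp p)) e' (rhead (rule_of_l r))) <->
  (forall r, List.In r L -> forall e, eval fI P e (lbody r) -> litv U e (lhead r)).
  apply: forall_in_iff => r Hr /=. by setoid_rewrite (lit_head _ _ _ (HL r Hr)).
have ES : (forall r, List.In r S -> forall e', eval fI P e' (rbody (rule_of_s r)) ->
    eval fI (fun p => sumI P U (usub pp p)) e' (rhead (rule_of_s r))) <->
  (forall r, List.In r S -> forall e, eval fI P e (sbody r) ->
     (litv U e (shead1 r) <-> litv U e (shead2 r))).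
  apply: forall_in_iff => r Hr /=. case: (HS r Hr) => H1 H2.
  rewrite /iff_form.
  setoid_rewrite (lit_head _ _ _ H1); setoid_rewrite (lit_head _ _ _ H2). done.
have ED : (forall r, List.In r Dr -> forall e', eval fI P e' (rbody (rule_of_d r)) ->
    eval fI (fun p => sumI P U (usub pp p)) e' (rhead (rule_of_d r))) <->
  (forall r, List.In r Dr -> forall e, eval fI P e (dbody r) ->
     exists l, List.In l (dhead r) /\ litv U e l).
  apply: forall_in_iff => r Hr /=. setoid_rewrite eval_bigor.
  setoid_rewrite exists_in_map.
  have K : forall e', (exists l, List.In l (dhead r) /\
      eval fI (fun p => sumI P U (usub pp p)) e' (lit_form l)) <->
      (exists l, List.In l (dhead r) /\ litv U e' l).
    by move=> e'; apply: exists_in_iff => l Hl; exact: lit_head (HD r Hr l Hl).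
  by setoid_rewrite K.
by rewrite EC EL ES ED.
Qed.

Definition trPieces (F : form (Pr + Pr) -> Prop) C L S Dr :=
  (forall r, List.In r C -> F (tr_c r)) /\ (forall r, List.In r L -> F (tr_l r)) /\
  (forall r, List.In r S -> F (tr_s r)) /\ (forall r, List.In r Dr -> F (tr_d r)) /\
  F (CC ar pp).

Lemma tr_eval (J : Pr + Pr -> seq D -> Prop) e C L S Dr :
  eval fI J e (tr ar pp C L S Dr) <-> trPieces (eval fI J e) C L S Dr.
Proof.
rewrite /tr eval_bigand !forall_in_app !forall_in_map /trPieces.
have E : (forall x, List.In x [:: CC ar pp] -> eval fI J e x) <-> eval fI J e (CC ar pp).
  by split=> [H|H x [<-|[]]] //; apply H; left.
by rewrite E.
Qed.

Lemma tr_dia (I W : Pr + Pr -> seq D -> Prop) e C L S Dr :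
  eval fI (sumI I W) e (fdia (intens pp) (tr ar pp C L S Dr)) <->
  trPieces (fun A => eval fI (sumI I W) e (fdia (intens pp) A)) C L S Dr.
Proof.
rewrite /tr fdia_bigand eval_bigand forall_in_map !forall_in_app !forall_in_map /trPieces.
have E : (forall x, List.In x [:: CC ar pp] -> eval fI (sumI I W) e (fdia (intens pp) x))
  <-> eval fI (sumI I W) e (fdia (intens pp) (CC ar pp)).
  by split=> [H|H x [<-|[]]] //; apply H; left.
by rewrite E.
Qed.

Definition good (l : lit) e := lpred l \in pp /\ size (args e l) = ar (lpred l).

Definition agree (U : Pr -> seq D -> Prop) (I : Pr + Pr -> seq D -> Prop) :=
  forall p, p \in pp -> forall xs : seq D, size xs = ar p -> (U p xs <-> I (inl p) xs).

Lemma F1 (I : Pr + Pr -> seq D -> Prop) l e : CCsem I -> good l e ->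
  (tl I e l <-> litv (Pof I) e l) /\ (tlc I e l <-> ~ litv (Pof I) e l).
Proof.
move=> HC [Hp Hs]; move: (HC _ Hp _ Hs); rewrite /tl /tlc /litv; case: lsign => H.
- tauto.
- split; [tauto|]. split; [tauto|]. move=> K; apply: Classical_Prop.NNPP; tauto.
Qed.

Lemma F4 (U : Pr -> seq D -> Prop) (I : Pr + Pr -> seq D -> Prop) l e :
  agree U I -> good l e -> (litv U e l <-> litv (Pof I) e l).
Proof.
move=> HA [Hp Hs]; move: (HA _ Hp _ Hs); rewrite /litv; case: lsign; tauto.
Qed.

Definition W1 (I : Pr + Pr -> seq D -> Prop) (U : Pr -> seq D -> Prop) :
  Pr + Pr -> seq D -> Prop :=
  fun v xs => match v with
              | inl p => I (inl p) xs /\ U p xs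
              | inr p => I (inr p) xs /\ ~ U p xs end.

Lemma F2 I U l e :
  (tl (W1 I U) e l <-> tl I e l /\ litv U e l) /\
  (tlc (W1 I U) e l <-> tlc I e l /\ ~ litv U e l).
Proof.
rewrite /tl /tlc /litv /W1; case: lsign => //.
split; [tauto|]. split=> -[H1 H2]; split => //; last exact: Classical_Prop.NNPP.
Qed.

Lemma prem_tlc J I e l : prem J I e l <-> tlc J e l \/ ~ tlc I e l.
Proof. by rewrite /prem /tlc; case: lsign. Qed.

Definition U2 (I W : Pr + Pr -> seq D -> Prop) : Pr -> seq D -> Prop :=
  fun p xs => (I (inl p) xs /\ W (inl p) xs) \/ (~ I (inl p) xs /\ ~ W (inr p) xs).

Lemma F3 I W l e :
  litv (U2 I W) e l <-> (litv (Pof I) e l /\ tl W e l) \/ (~ litv (Pof I) e l /\ ~ tlc W e l).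
Proof.
rewrite /litv /tl /tlc /U2; case: lsign; first tauto.
split; last tauto.
move=> H; case: (Classical_Prop.classic (I (inl (lpred l)) (args e l))) => HI.
- right; tauto.
- left; split => //; apply: Classical_Prop.NNPP; tauto.
Qed.

Lemma F5 (I W : Pr + Pr -> seq D -> Prop) l e :
  ple (intens pp) (fun v => ar (hatv v)) W I -> good l e ->
  (tl W e l -> tl I e l) /\ (tlc W e l -> tlc I e l).
Proof.
move=> H [Hp Hs]; rewrite /tl /tlc; case: lsign; split; apply: H => //.
Qed.


Lemma lit_wf (l : lit) : wf ar (lit_form l) -> forall e, size (args e l) = ar (lpred l).
Proof. by rewrite /lit_form; case: lsign => /= /eqP H e; rewrite /args size_map. Qed.

Lemma wf_bigor V (a : V -> nat) (l : seq (form V)) :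
  wf a (bigor l) -> forall A, List.In A l -> wf a A.
Proof.
elim: l => //= A [|B l] IH.
- by move=> H X [<-|[]].
- move=> /andP [HA HB] X [<-|HX] //; exact: IH.
Qed.

Lemma main_sec C L S Dr :
  (forall r, List.In r (L) -> lpred (lhead r) \in pp) ->
  (forall r, List.In r (S) -> lpred (shead1 r) \in pp /\ lpred (shead2 r) \in pp) ->
  (forall r, List.In r (Dr) -> forall l, List.In l (dhead r) -> lpred l \in pp) ->
  (forall r, List.In r (rules_of C L S Dr) -> wf ar (rhead r) /\ wf ar (rbody r)) ->
  forall (I : Pr + Pr -> seq D -> Prop) (env : nat -> D),
    SM fI (intens pp) (fun v => ar (hatv v)) I env (tr ar pp C L S Dr) <->
    (causal_sem fI ar pp (rules_of C L S Dr) (fun p => I (inl p)) env /\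
     eval fI I env (CC ar pp)).
Proof.
move=> HL HS HD Hwf I env.
have gL : forall r, List.In r L -> forall e, good (lhead r) e.
  move=> r Hr e; split; first exact: HL.
  apply: lit_wf; apply: (proj1 (Hwf (rule_of_l r) _)).
  by apply/List.in_app_iff; right; apply/List.in_app_iff; left; apply: List.in_map.
have gS : forall r, List.In r S -> forall e, good (shead1 r) e /\ good (shead2 r) e.
  move=> r Hr e.
  have : wf ar (rhead (rule_of_s r)).
    apply: (proj1 (Hwf (rule_of_s r) _)).
    apply/List.in_app_iff; right; apply/List.in_app_iff; right.
    by apply/List.in_app_iff; left; apply: List.in_map.
  case: (HS r Hr) => H1 H2 /= /andP [/andP [W1' W2'] _].
  by split; split => //; apply: lit_wf.
have gD : forall r, List.In r Dr -> forall l, List.In l (dhead r) -> forall e, good l e.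
  move=> r Hr l Hl e; split; first exact: (HD r Hr l Hl).
  have : wf ar (rhead (rule_of_d r)).
    apply: (proj1 (Hwf (rule_of_d r) _)).
    apply/List.in_app_iff; right; apply/List.in_app_iff; right.
    by apply/List.in_app_iff; right; apply: List.in_map.
  move=> /= /wf_bigor H; apply: lit_wf; apply: H; exact: List.in_map.
have HSpp : forall r, List.In r S -> lpred (shead1 r) \in pp /\ lpred (shead2 r) \in pp := HS.
set P := fun p => I (inl p).
split.
-
  move=> [Htr Hmin].
  case/tr_eval: Htr => HCt [HLt [HSt [HDt HCC]]].
  have HCs := CC_eval HCC.
  split => //.
  move=> U; rewrite (@Tdag_sem P U env C L S Dr HL HS HD).
  split.
  + move=> [TC [TL [TS TD]]].
    apply: Classical_Prop.NNPP => Hna; apply: Hmin; exists (W1 I U); split.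
    * split.
      - by case=> p _ xs _ [].
      - move=> Hp; apply: Hna => p Hpp xs Hs; split.
        + move=> HU; apply: Classical_Prop.NNPP => HI.
          case: (HCs p Hpp xs Hs) => _ [//|HIr].
          by case: (Hp (inr p) Hpp xs Hs HIr).
        + by move=> HI; case: (Hp (inl p) Hpp xs Hs HI).
    * apply/tr_dia; split; [|split; [|split; [|split]]].
      - move=> r Hr; apply/trc_dia; exact: HCt.
      - move=> r Hr; apply/(trl_dia _ _ _ (HL r Hr)) => e He.
        case: (@F2 I U (lhead r) e) => -> _; split; last exact: TL.
        by move/trl_eval: (HLt r Hr); apply.
      - move=> r Hr; case: (HS r Hr) => H1 H2; apply/(trs_dia _ _ _ H1 H2) => e He.
        move/trs_eval: (HSt r Hr) => /(_ e He); rewrite /trS.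
        move: (TS r Hr e He) (@F2 I U (shead1 r) e) (@F2 I U (shead2 r) e); tauto.
      - move=> r Hr; apply/(trd_dia _ _ _ (HD r Hr)) => e He Hprem.
        case: (TD r Hr e He) => l [Hl Hlv]; exists l; split => //.
        case: (@F2 I U l e) => -> _; split => //.
        move: (Hprem l Hl); rewrite prem_tlc.
        case: (@F2 I U l e) (F1 HCs (gD r Hr l Hl e)) => _ -> [-> ->]; tauto.
      - exact: CC_dia.
  + move=> Hag; split; [|split; [|split]].
    * by move=> r Hr; move/trc_eval: (HCt r Hr).
    * move=> r Hr e He; rewrite (F4 Hag (gL r Hr e)) -(proj1 (F1 HCs (gL r Hr e))).
      by move/trl_eval: (HLt r Hr); apply.
    * move=> r Hr e He; case: (gS r Hr e) => g1 g2.
      rewrite (F4 Hag g1) (F4 Hag g2) -(proj1 (F1 HCs g1)) -(proj1 (F1 HCs g2)).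
      move/trs_eval: (HSt r Hr) => /(_ e He) [] //.
    * move=> r Hr e He; move/trd_eval: (HDt r Hr) => /(_ e He) [].
        move=> l Hl; rewrite prem_tlc; exact: Classical_Prop.classic.
      move=> l [Hl Htl]; exists l; split => //.
      by rewrite (F4 Hag (gD r Hr l Hl e)) -(proj1 (F1 HCs (gD r Hr l Hl e))).
-
  move=> [Hcs HCC].
  have HCs := CC_eval HCC.
  have TP : TdagSem P P C L S Dr.
    apply/(@Tdag_sem P P env C L S Dr HL HS HD); apply/(Hcs P) => p _ xs _; done.
  case: TP => [TC [TL [TS TD]]].
  have HCt : forall r, List.In r C -> eval fI I env (tr_c r).
    by move=> r Hr; apply/trc_eval; exact: TC.
  have HLt : forall r, List.In r L -> eval fI I env (tr_l r).
    move=> r Hr; apply/trl_eval => e He.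
    by rewrite (proj1 (F1 HCs (gL r Hr e))); apply: TL.
  have HSt : forall r, List.In r S -> eval fI I env (tr_s r).
    move=> r Hr; apply/trs_eval => e He; case: (gS r Hr e) => g1 g2.
    move: (TS r Hr e He) (F1 HCs g1) (F1 HCs g2); rewrite /trS; tauto.
  have HDt : forall r, List.In r Dr -> eval fI I env (tr_d r).
    move=> r Hr; apply/trd_eval => e He _.
    case: (TD r Hr e He) => l [Hl Hlv]; exists l; split => //.
    by rewrite (proj1 (F1 HCs (gD r Hr l Hl e))).
  split; first by apply/tr_eval; do !split.
  move=> [W [[Hple Hnple] Hdia]].
  case/tr_dia: Hdia => _ [HLd [HSd [HDd _]]].
  have TU : TdagSem P (U2 I W) C L S Dr.
    split; [|split; [|split]].
    + exact: TC.
    + move=> r Hr e He; rewrite F3; left; split; first exact: TL.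
      by move/(trl_dia _ _ _ (HL r Hr)): (HLd r Hr); apply.
    + move=> r Hr e He; case: (HS r Hr) => H1 H2.
      move/(trs_dia _ _ _ H1 H2): (HSd r Hr) => /(_ e He); rewrite /trS.
      rewrite !F3; move: (TS r Hr e He); tauto.
    + move=> r Hr e He; apply: Classical_Prop.NNPP => Hno.
      move/(trd_dia _ _ _ (HD r Hr)): (HDd r Hr) => /(_ e He) [].
        move=> l Hl; rewrite prem_tlc.
        case: (Classical_Prop.classic (tlc I e l)) => Htc; last by right.
        left; apply: Classical_Prop.NNPP => Hntc; apply: Hno; exists l; split => //.
        rewrite F3; right; split => //.
        by rewrite -(proj2 (F1 HCs (gD r Hr l Hl e))).
      move=> l [Hl HtW]; apply: Hno; exists l; split => //.
      rewrite F3; left; split => //.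
      rewrite -(proj1 (F1 HCs (gD r Hr l Hl e))).
      exact: (proj1 (F5 Hple (gD r Hr l Hl e))).
  have Hag := proj1 (Hcs (U2 I W)) (proj2 (@Tdag_sem P (U2 I W) env C L S Dr HL HS HD) TU).
  apply: Hnple; case=> p Hpp xs Hs HI.
  + case: (proj2 (Hag p Hpp xs Hs) HI); tauto.
  + case: (HCs p Hpp xs Hs) => Hn _.
    apply: Classical_Prop.NNPP => HW.
    have : ~ U2 I W p xs by rewrite (Hag p Hpp xs Hs); tauto.
    rewrite /U2; tauto.
Qed.

End Main.

Theorem mainTheorem1 (Fn : Type) (Pr : eqType) (ar : Pr -> nat) (pp : seq Pr)
  (C : seq (crule Fn Pr)) (L : seq (lrule Fn Pr)) (S : seq (srule Fn Pr))
  (Dr : seq (drule Fn Pr)) :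
  uniq pp ->
  (* explainable heads *)
  (forall r, List.In r (L) -> lpred (lhead r) \in pp) ->
  (forall r, List.In r (S) -> lpred (shead1 r) \in pp /\ lpred (shead2 r) \in pp) ->
  (forall r, List.In r (Dr) -> forall l, List.In l (dhead r) -> lpred l \in pp) ->
  (* well-formedness (arities) of all rules *)
  (forall r, List.In r (rules_of C L S Dr) -> wf ar (rhead r) /\ wf ar (rbody r)) ->
  (* bodies contain no implication *)
  (forall r, List.In r (rules_of C L S Dr) -> noimp (rbody r)) ->
  forall (D : Type) (fI : Fn -> seq D -> D) (I : Pr + Pr -> seq D -> Prop)
         (env : nat -> D),
    SM fI (intens pp) (fun v => ar (hatv v)) I env (tr ar pp C L S Dr) <->
    (causal_sem fI ar pp (rules_of C L S Dr) (fun p => I (inl p)) env /\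
     eval fI I env (CC ar pp)).
Proof.
move=> _ HL HS HD Hwf _ D fI I env.
exact: (@main_sec Fn Pr ar pp D fI C L S Dr HL HS HD Hwf I env).
Qed.
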